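(* Let $n\ge1$, $k\ge2$, $\mathcal{K}=\{\kappa_0,\dots,\kappa_{k-1}\}$ a set of size $k$, $\epsilon\ge0$ and $p=e^\epsilon/(k-1+e^\epsilon)$. For the uniform prior $\pi$ on $\mathcal{K}^n$ and the single-target gain function $g_{\rm T}$, $$V_{\rm T}[\pi\triangleright\mathbf{N}\mathbf{S}]=\frac{1}{k^n}\sum_{\substack{n_0,\dots,n_{k-1}\ge0\\ n_0+\dots+n_{k-1}=n}}\binom{n}{n_0,\dots,n_{k-1}}\frac{p\,n^*+\frac{1-p}{k-1}(n-n^* )}{n},$$ where $n^*=\max(n_0,\dots,n_{k-1})$.
   Context: A dataset is $x=(x_0,\dots,x_{n-1})\in\mathcal{K}^n$; its histogram $h(x)$ is the map $\kappa\mapsto|\{i:x_i=\kappa\}|$; $\#z$ is the number of datasets with histogram $z$. Full $k$-RR channel $\mathbf{N}:\mathcal{K}^n\to\mathcal{K}^n$: $\mathbf{N}_{x,y}=\prod_{i=0}^{n-1}q(y_i\mid x_i)$, $q(b\mid a)=p$ if $b=a$, $(1-p)/(k-1)$ otherwise. Shuffle channel $\mathbf{S}:\mathcal{K}^n\to\mathcal{K}^n$: $\mathbf{S}_{x,y}=1/\#h(x)$ if $h(y)=h(x)$, else $0$; $\mathbf{N}\mathbf{S}$ is the matrix product. Uniform prior $\pi_x=1/k^n$. Single-target gain function: $\mathcal{W}=\mathcal{K}$, $g_{\rm T}(w,x)=1$ if $x_0=w$, else $0$. Posterior vulnerability: $V_{\rm T}[\pi\triangleright\mathbf{C}]=\sum_{y}\max_{w}\sum_{x}\pi_x\mathbf{C}_{x,y}g_{\rm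 T}(w,x)$. The multinomial coefficient is $\binom{n}{n_0,\dots,n_{k-1}}=n!/(n_0!\cdots n_{k-1}!)$. *)

(* Defs.v *)
From HB Require Import structures.
From mathcomp Require Import all_boot all_order all_algebra.
From mathcomp Require Import reals sequences exp.
Set Implicit Arguments. Unset Strict Implicit. Unset Printing Implicit Defensive.
Import Order.TTheory GRing.Theory Num.Theory.
Local Open Scope ring_scope.

Section Defs.
Variables (R : realType) (n k : nat).

(* K = 'I_k (kappa_j = j), datasets are x : 'I_n -> 'I_k *)
Definition dataset := {ffun 'I_n -> 'I_k}.

Definition hist (x : dataset) : {ffun 'I_k -> nat} :=
  [ffun a => #|[set i | x i == a]|].

Definition numhist (z : {ffun 'I_k -> nat}) : nat :=
  #|[set y : dataset | hist y == z]|.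

Definition krr (p : R) (a b : 'I_k) : R :=
  if b == a then p else (1 - p) / (k%:R - 1).

Definition Nch (p : R) (x y : dataset) : R := \prod_(i < n) krr p (x i) (y i).

Definition Sch (x y : dataset) : R :=
  if hist y == hist x then 1 / (numhist (hist x))%:R else 0.

Definition NSch (p : R) (x y : dataset) : R := \sum_(z : dataset) Nch p x z * Sch z y.

Definition unif_prior (x : dataset) : R := 1 / (k%:R ^+ n).

(* single-target gain: g_T(w, x) = 1 iff x_0 = w (index 0 of 'I_n, n >= 1) *)
Definition gT (w : 'I_k) (x : dataset) : R :=
  if [exists i : 'I_n, (val i == 0%N) && (x i == w)] then 1 else 0.

(* The max is a fold of Num.max starting at 0; all summands considered are
   nonnegative, so this is the maximum over the (nonempty) set W = 'I_k. *)
Definition VT (pi : dataset -> R) (C : dataset -> dataset -> R) : R :=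
  \sum_(y : dataset) \big[Num.max/0]_(w : 'I_k)
      \sum_(x : dataset) pi x * C x y * gT w x.

End Defs.

(* Main.v *)
Set Warnings "-notation-overridden,-ambiguous-paths,-deprecated".
Require Import Defs.
From HB Require Import structures.
From mathcomp Require Import all_boot all_order all_algebra.
From mathcomp Require Import reals sequences exp.
From mathcomp Require Import zify ring lra.
Import Order.TTheory GRing.Theory Num.Theory.
Set Implicit Arguments. Unset Strict Implicit. Unset Printing Implicit Defensive.

Definition fcons n k (x : 'I_k) (y : {ffun 'I_n -> 'I_k}) : {ffun 'I_n.+1 -> 'I_k} :=
  [ffun i => if unlift ord0 i is Some j then y j else x].
Definition ftail n k (y : {ffun 'I_n.+1 -> 'I_k}) : {ffun 'I_n -> 'I_k} :=
  [ffun j => y (lift ord0 j)].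

Lemma fcons0 n k x (y : {ffun 'I_n -> 'I_k}) : fcons x y ord0 = x.
Proof. by rewrite ffunE unlift_none. Qed.

Lemma fconsS n k x (y : {ffun 'I_n -> 'I_k}) j : fcons x y (lift ord0 j) = y j.
Proof. by rewrite ffunE liftK. Qed.

Lemma big_fcons (T : Type) (idx : T) (op : Monoid.com_law idx) n k
  (F : {ffun 'I_n.+1 -> 'I_k} -> T) :
  \big[op/idx]_y F y = \big[op/idx]_x \big[op/idx]_(y : {ffun 'I_n -> 'I_k}) F (fcons x y).
Proof.
rewrite pair_big /= (reindex (fun p : 'I_k * {ffun 'I_n -> 'I_k} => fcons p.1 p.2)) //.
exists (fun y : {ffun 'I_n.+1 -> 'I_k} => (y ord0, ftail y)).
  move=> [x y] _ /=; rewrite fcons0; congr pair; apply/ffunP => j.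
  by rewrite ffunE fconsS.
move=> y _ /=; apply/ffunP => i; rewrite ffunE.
case: unliftP => [j ->|->] //; by rewrite ffunE.
Qed.

Lemma card_sum (T : finType) (P : pred T) : #|[set x | P x]| = \sum_x (P x : nat).
Proof.
rewrite -sum1_card big_mkcond /=; apply: eq_bigr => x _; rewrite inE; by case: (P x).
Qed.

Lemma histE n k (y : dataset n k) a : hist y a = \sum_i (y i == a : nat).
Proof. by rewrite ffunE card_sum. Qed.

Lemma hist_fcons n k x (y : dataset n k) a : hist (fcons x y) a = (x == a) + hist y a.
Proof.
rewrite !histE big_ord_recl fcons0; congr addn; apply: eq_bigr => j _.
by rewrite fconsS.
Qed.

Lemma hist_sum n k (y : dataset n k) : \sum_a hist y a = n.
Proof.
under eq_bigr do rewrite histE.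
rewrite exchange_big /= -[X in _ = X]card_ord -sum1_card; apply: eq_bigr => i _.
rewrite (bigD1 (y i)) //= eqxx big1 // => a /negbTE; by rewrite eq_sym => ->.
Qed.

Lemma hist_le n k (y : dataset n k) a : hist y a <= n.
Proof. have := hist_sum y; rewrite (bigD1 a) //=; lia. Qed.

Definition zdec k (z : {ffun 'I_k -> nat}) (x : 'I_k) : {ffun 'I_k -> nat} :=
  [ffun a => z a - (x == a)].

Lemma zdecE k (z : {ffun 'I_k -> nat}) x a : zdec z x a = z a - (x == a).
Proof. by rewrite ffunE. Qed.

Lemma hist_fcons_eq n k x (y : dataset n k) z :
  (hist (fcons x y) == z) = (0 < z x) && (hist y == zdec z x).
Proof.
apply/eqP/andP => [H|[Hx /eqP H]].
  split.
    by rewrite -H hist_fcons eqxx.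
  apply/eqP/ffunP => a; rewrite zdecE -H hist_fcons. by rewrite addKn.
apply/ffunP => a; rewrite hist_fcons H zdecE.
case: eqP => [<-|_] /=; [by rewrite add1n subn1 prednK | by rewrite subn0].
Qed.

Lemma numhistE n k (z : {ffun 'I_k -> nat}) :
  numhist n z = \sum_(y : dataset n k) (hist y == z : nat).
Proof. by rewrite /numhist card_sum. Qed.

Lemma numhist_rec n k (z : {ffun 'I_k -> nat}) :
  numhist n.+1 z = \sum_x (if 0 < z x then numhist n (zdec z x) else 0).
Proof.
rewrite numhistE (big_fcons (Monoid.Law.clone _ _ addn _)) /=.
apply: eq_bigr => x _; rewrite numhistE.
case: ifP => H.
  by apply: eq_bigr => y _; rewrite hist_fcons_eq H.
by rewrite big1 // => y _; rewrite hist_fcons_eq H.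
Qed.

Lemma prod_zdec k (z : {ffun 'I_k -> nat}) x : 0 < z x ->
  \prod_a (z a)`! = z x * \prod_a (zdec z x a)`!.
Proof.
move=> Hx; rewrite (bigD1 x) //= [X in _ = _ * X](bigD1 x) //= zdecE eqxx.
rewrite mulnA -(prednK Hx) factS subn1 /=; congr (_ * _).
apply: eq_bigr => a /negbTE Ha; by rewrite zdecE eq_sym Ha subn0.
Qed.

Lemma sum_zdec k (z : {ffun 'I_k -> nat}) x : 0 < z x ->
  \sum_a z a = (\sum_a zdec z x a).+1.
Proof.
move=> Hx; rewrite (bigD1 x) //= [X in _ = X.+1](bigD1 x) //= zdecE eqxx.
have -> : \sum_(a | a != x) zdec z x a = \sum_(a | a != x) z a.
  apply: eq_bigr => a /negbTE Ha; by rewrite zdecE eq_sym Ha subn0.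
by rewrite subn1 -addSn prednK.
Qed.

Lemma numhist_count n k (z : {ffun 'I_k -> nat}) :
  \sum_a z a = n -> numhist n z * \prod_a (z a)`! = n`!.
Proof.
elim: n z => [|n IH] z Hz.
  have z0 : forall a, z a = 0.
    move=> a; apply/eqP; move: Hz; rewrite (bigD1 a) //=; lia.
  rewrite big1 ?muln1; last by move=> a _; rewrite z0.
  rewrite numhistE (eq_bigr (fun _ => 1)); last first.
    move=> y _; have -> // : hist y == z.
    apply/eqP/ffunP => a; rewrite z0 histE big_ord0 //.
  rewrite sum1_card card_ffun !card_ord. by [].
rewrite numhist_rec big_distrl /=.
rewrite (eq_bigr (fun x => z x * n`!)); last first.
  move=> x _; case: (posnP (z x)) => [->|Hx]; first by rewrite mul0n.
  rewrite (prod_zdec Hx) mulnCA IH //.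
  by apply/eqP; rewrite -eqSS -sum_zdec // Hz.
by rewrite -big_distrl /= Hz factS.
Qed.

Lemma count_first n k (z : {ffun 'I_k -> nat}) w :
  \sum_(y : dataset n.+1 k) ((hist y == z) && (y ord0 == w) : nat) =
  if 0 < z w then numhist n (zdec z w) else 0.
Proof.
rewrite (big_fcons (Monoid.Law.clone _ _ addn _)) /=.
rewrite (bigD1 w) //= [X in _ + X]big1 ?addn0; last first.
  move=> x Hx; apply: big1 => y _; rewrite fcons0 (negbTE Hx) andbF //.
rewrite numhistE; case: ifP => H.
  by apply: eq_bigr => y _; rewrite fcons0 eqxx andbT hist_fcons_eq H.
by rewrite big1 // => y _; rewrite hist_fcons_eq H.
Qed.

Lemma count_first_mul n k (z : {ffun 'I_k -> nat}) w :
  \sum_a z a = n.+1 ->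
  (\sum_(y : dataset n.+1 k) ((hist y == z) && (y ord0 == w) : nat)) * n.+1 =
  numhist n.+1 z * z w.
Proof.
move=> Hz; rewrite count_first.
case: (posnP (z w)) => [->|Hw]; first by rewrite muln0.
have Hp : 0 < \prod_a (z a)`! by apply: prodn_gt0 => a; exact: fact_gt0.
apply/eqP; rewrite -(eqn_pmul2r Hp); apply/eqP.
rewrite [RHS]mulnAC numhist_count // [in LHS](prod_zdec Hw).
set P := \prod_a _.
have -> : numhist n (zdec z w) * n.+1 * (z w * P) = (numhist n (zdec z w) * P) * n.+1 * z w.
  lia.
rewrite numhist_count; last first.
  by apply/eqP; rewrite -eqSS -sum_zdec // Hz.
by rewrite factS [n.+1 * _]mulnC.
Qed.

Local Open Scope ring_scope.

Lemma krr_sum (R : realType) k (p : R) (b : 'I_k) : (1 < k)%N ->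
  \sum_a krr p a b = 1.
Proof.
move=> hk; rewrite (bigD1 b) //= /krr eqxx.
rewrite (eq_bigr (fun _ => (1 - p) / (k%:R - 1))); last first.
  by move=> a /negbTE Ha; rewrite eq_sym Ha.
rewrite sumr_const cardC1 card_ord -[_ *+ k.-1]mulr_natr.
have hk1 : (k%:R - 1 : R) != 0.
  rewrite subr_eq0 pnatr_eq1; lia.
have -> : ((k.-1)%:R : R) = k%:R - 1.
  by rewrite -[in RHS](prednK (ltnW hk)) -natr1 addrK.
by field.
Qed.

Lemma gT_ord0 (R : realType) n k w (x : dataset n.+1 k) : gT R w x = (x ord0 == w)%:R.
Proof.
rewrite /gT; case: existsP => [[i /andP[/eqP i0 xi]]|H].
  have E : i = ord0 by apply: ord_inj.
  by rewrite -E xi.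
case: eqP => // E; exfalso; apply: H; exists ord0; by rewrite E eqxx.
Qed.

Lemma sumN (R : realType) n k (p : R) w (z : dataset n.+1 k) : (1 < k)%N ->
  \sum_x Nch p x z * gT R w x = krr p w (z ord0).
Proof.
move=> hk.
pose G (i : 'I_n.+1) (a : 'I_k) : R :=
  krr p a (z i) * (if i == ord0 then (a == w)%:R else 1).
transitivity (\sum_(x : dataset n.+1 k) \prod_i G i (x i)).
  apply: eq_bigr => x _; rewrite gT_ord0 /Nch big_ord_recl [in RHS]big_ord_recl.
  rewrite /G eqxx mulrAC; congr (_ * _); apply: eq_bigr => i _.
  by rewrite mulr1.
rewrite -(bigA_distr_bigA (R:=R)) /= big_ord_recl [X in _ * X]big1; last first.
  move=> i _; rewrite /G /=.
  by under eq_bigr do rewrite mulr1; exact: krr_sum.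
rewrite mulr1 /G eqxx (bigD1 w) //= eqxx mulr1 big1 ?addr0 //.
by move=> a /negbTE Ha; rewrite Ha mulr0.
Qed.

Lemma numhist_gt0 n k (y : dataset n k) : (0 < numhist n (hist y))%N.
Proof. by rewrite /numhist card_gt0; apply/set0Pn; exists y; rewrite inE. Qed.

Lemma innerA (R : realType) n k (p : R) w (y : dataset n.+1 k) : (1 < k)%N ->
  \sum_x unif_prior R x * NSch p x y * gT R w x =
  1 / (k%:R ^+ n.+1) * ((1 - p) / (k%:R - 1) +
     (p - (1 - p) / (k%:R - 1)) * (hist y w)%:R / n.+1%:R).
Proof.
move=> hk.
set r := (1 - p) / (k%:R - 1).
set u : R := 1 / (k%:R ^+ n.+1).
pose m := numhist n.+1 (hist y).
have mE : numhist n.+1 (hist y) = m by [].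
clearbody m.
transitivity (u * \sum_z Sch R z y * krr p w (z ord0)).
  transitivity (\sum_x \sum_z u * (Sch R z y * (Nch p x z * gT R w x))).
    apply: eq_bigr => x _; rewrite /unif_prior -/u /NSch big_distrr big_distrl /=.
    by apply: eq_bigr => z _; ring.
  rewrite exchange_big /= big_distrr /=; apply: eq_bigr => z _.
  by rewrite -big_distrr -big_distrr /= sumN.
transitivity (u / m%:R * \sum_(z : dataset n.+1 k) (hist z == hist y)%:R *
     (r + (p - r) * (z ord0 == w)%:R)).
  rewrite -mulrA; congr (_ * _); rewrite big_distrr /=; apply: eq_bigr => z _.
  rewrite /Sch /krr; case: (eqVneq (hist y) (hist z)) => [E|NE].
    have Hm' : numhist n.+1 (hist z) = m by rewrite -mE; exact: (esym (f_equal (@numhist n.+1 k) E)).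
    have Hb : (hist z == hist y) = true by apply/eqP; exact: (esym E).
    rewrite Hm' /r div1r; congr (_ * _).
    by case: (_ == _) => /=; ring.
  by rewrite !mul0r mulr0.
have Hm : (\sum_(z : dataset n.+1 k) ((hist z == hist y)%:R : R)) = m%:R.
  by rewrite -mE numhistE natr_sum.
set c := (\sum_(z : dataset n.+1 k) ((hist z == hist y) && (z ord0 == w) : nat)).
have Hc : (\sum_(z : dataset n.+1 k) ((hist z == hist y)%:R * ((z ord0 == w)%:R : R))) = c%:R.
  rewrite /c natr_sum; apply: eq_bigr => z _.
  by case: (_ == _); case: (_ == _); rewrite ?mulr0 ?mulr1 ?mul0r.
have Hcm : (c * n.+1 = m * hist y w)%N by rewrite /c -mE count_first_mul // hist_sum.
have Hm0 : (m%:R : R) != 0 by rewrite pnatr_eq0 -lt0n -mE numhist_gt0.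
have Hc' : (c%:R : R) = m%:R * (hist y w)%:R / n.+1%:R.
  by rewrite -natrM -Hcm natrM mulfK // pnatr_eq0.
transitivity (u / m%:R * (r * m%:R + (p - r) * c%:R)).
  rewrite -Hm -Hc; congr (_ * _); rewrite !big_distrr -big_split /=.
  by apply: eq_bigr => z _; ring.
rewrite Hc'; field.
by rewrite Hm0 andbT addrC natr1 pnatr_eq0.
Qed.

Lemma max_step (R : realType) n k (p r : R) (h : 'I_k -> nat) :
  (0 < k)%N -> 0 <= r -> r <= p ->
  \big[Num.max/0]_w (1 / (k%:R ^+ n.+1) * (r + (p - r) * (h w)%:R / n.+1%:R)) =
  1 / (k%:R ^+ n.+1) * ((p * (\max_w h w)%:R + r * (n.+1%:R - (\max_w h w)%:R)) / n.+1%:R).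
Proof.
move=> hk hr hpr.
set u : R := 1 / (k%:R ^+ n.+1).
set K : R := u * (p - r) / n.+1%:R.
have hu : 0 <= u by rewrite /u divr_ge0 // exprn_ge0.
have hK : 0 <= K by rewrite /K divr_ge0 // mulr_ge0 // subr_ge0.
have BE : forall t : nat, u * (r + (p - r) * t%:R / n.+1%:R) = u * r + K * t%:R.
  by move=> t; rewrite /K; ring.
have Bmono : forall t t' : nat, (t <= t')%N -> u * r + K * t%:R <= u * r + K * t'%:R.
  by move=> t t' htt; rewrite lerD2l ler_wpM2l // ler_nat.
rewrite (eq_bigr (fun w => u * r + K * (h w)%:R)); last by move=> w _; exact: BE.
set M := \max_w h w.
have -> : u * ((p * M%:R + r * (n.+1%:R - M%:R)) / n.+1%:R) = u * r + K * M%:R.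
  rewrite /K; field; by rewrite addrC natr1 pnatr_eq0.
apply/le_anti/andP; split.
  apply: bigmax_le; first by rewrite addr_ge0 // mulr_ge0.
  by move=> w _; apply: Bmono; exact: leq_bigmax.
have hI : (0 < #|'I_k|)%N by rewrite card_ord.
have [w0 Hw0] := bigop.eq_bigmax h hI.
rewrite /M Hw0; exact: (le_bigmax _ (fun w => u * r + K * (h w)%:R) w0).
Qed.

Definition hz n k (y : dataset n k) : {ffun 'I_k -> 'I_n.+1} := [ffun a => inord (hist y a)].
Definition zn n k (z : {ffun 'I_k -> 'I_n.+1}) : {ffun 'I_k -> nat} := [ffun a => (z a : nat)].

Lemma hzE n k (y : dataset n k) a : hz y a = inord (hist y a).
Proof. by rewrite ffunE. Qed.
Lemma znE n k (z : {ffun 'I_k -> 'I_n.+1}) a : zn z a = z a.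
Proof. by rewrite ffunE. Qed.

Lemma hz_eq n k (y : dataset n k) z : (hz y == z) = (hist y == zn z).
Proof.
apply/eqP/eqP => H.
  apply/ffunP => a; rewrite znE -H hzE inordK // ltnS; exact: hist_le.
apply/ffunP => a; apply: val_inj; rewrite hzE /= inordK; last by rewrite ltnS hist_le.
by rewrite H znE.
Qed.

Lemma reindex_hist (R : realType) n k (G : {ffun 'I_k -> nat} -> R) :
  \sum_(y : dataset n k) G (hist y) =
  \sum_(z : {ffun 'I_k -> 'I_n.+1} | (\sum_(j < k) (z j : nat))%N == n)
     ((n`!)%:R / (\prod_(j < k) ((z j : nat)`!)%:R)) * G (zn z).
Proof.
rewrite (partition_big (@hz n k) (fun z : {ffun 'I_k -> 'I_n.+1} => (\sum_(j < k) (z j : nat))%N == n)); last first.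
  move=> y _; apply/eqP; rewrite -[RHS](hist_sum y); apply: eq_bigr => a _.
  by rewrite hzE inordK // ltnS hist_le.
apply: eq_bigr => z /eqP Hz.
rewrite (eq_bigr (fun _ => G (zn z))); last by move=> y; rewrite hz_eq => /eqP ->.
have -> : \sum_(y : dataset n k | true && (hz y == z)) G (zn z) =
          (numhist n (zn z))%:R * G (zn z).
  rewrite numhistE natr_sum big_distrl /= big_mkcond /=; apply: eq_bigr => y _.
  by rewrite hz_eq; case: (_ == _); rewrite ?mul1r ?mul0r.
congr (_ * _).
have Hs : \sum_a zn z a = n by rewrite [RHS](esym Hz); apply: eq_bigr => a _; rewrite znE.
have Hc := numhist_count Hs.
have Hp : (0 < \prod_a (z a : nat)`!)%N by apply: prodn_gt0 => a; exact: fact_gt0.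
have Hpe : \prod_a (zn z a)`! = \prod_a (z a : nat)`! by apply: eq_bigr => a _; rewrite znE.
rewrite Hpe in Hc.
rewrite -Hc natrM -natr_prod mulfK; last by rewrite pnatr_eq0 -lt0n Hp.
done.
Qed.

Unset Implicit Arguments.

Theorem mainTheorem14 (R : realType) (n k : nat) (eps : R)
  (hn : (1 <= n)%N) (hk : (2 <= k)%N) (heps : 0 <= eps) :
  let p := expR eps / (k%:R - 1 + expR eps) in
  VT (@unif_prior R n k) (@NSch R n k p) =
  1 / (k%:R ^+ n) *
  \sum_(z : {ffun 'I_k -> 'I_n.+1} | (\sum_(j < k) (z j : nat))%N == n)
     ((n`!)%:R / (\prod_(j < k) ((z j : nat)`!)%:R)) *
     (let nstar := (\max_(j < k) (z j : nat))%N in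
      (p * nstar%:R + (1 - p) / (k%:R - 1) * (n%:R - nstar%:R)) / n%:R).
Proof.
move=> p; case: n hn => // n _.
set r := (1 - p) / (k%:R - 1).
have e1 : 1 <= expR eps.
  apply: le_trans (expR_ge1Dx eps); by rewrite lerDl.
have hk1 : (0 : R) < k%:R - 1.
  by rewrite subr_gt0 ltr1n.
have hD : (0 : R) < k%:R - 1 + expR eps by rewrite addr_gt0 // (lt_le_trans ltr01 e1).
have rE : r = 1 / (k%:R - 1 + expR eps).
  rewrite /r /p; field.
  by rewrite (gt_eqF hD) (gt_eqF hk1).
have hr : 0 <= r by rewrite rE divr_ge0 // ltW.
have hpr : r <= p by rewrite rE /p ler_wpM2r // invr_ge0 ltW.
rewrite /VT.
rewrite (eq_bigr (fun y : dataset n.+1 k => 1 / (k%:R ^+ n.+1) *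
   ((p * (\max_w hist y w)%:R + r * (n.+1%:R - (\max_w hist y w)%:R)) / n.+1%:R))); last first.
  move=> y _.
  rewrite (eq_bigr (fun w => 1 / (k%:R ^+ n.+1) * (r + (p - r) * (hist y w)%:R / n.+1%:R))); last first.
    by move=> w _; rewrite innerA.
  by rewrite max_step // ltnW.
rewrite -big_distrr /=; congr (_ * _).
rewrite (@reindex_hist R n.+1 k (fun h : {ffun 'I_k -> nat} =>
   (p * (\max_w h w)%:R + r * (n.+1%:R - (\max_w h w)%:R)) / n.+1%:R)).
apply: eq_bigr => z _; congr (_ * _).
have -> : (\max_w zn z w = \max_j (z j : nat))%N by apply: eq_bigr => j _; rewrite znE.
by [].
Qed.
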